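(* Let $n\ge2$, $L>1$, let $\sigma_{1,1}$ be as below, and define $f_{1,1}:[1,\infty)\to\mathbb{R}$ by $f_{1,1}(r)=r+\frac{1+\sigma_{1,1}}{n-1-\sigma_{1,1}}\,r^{-(n-1)}$. Define $F,G:[1,\infty)\to\mathbb{R}$ by $$F(r)=(f_{1,1}'(r))^2+\frac{n-1}{r^2}f_{1,1}(r)^2,\qquad G(r)=2f_{1,1}(r)f_{1,1}'(r)+\frac{n-1}{r}f_{1,1}(r)^2.$$ Then $F$ is a decreasing function of $r$ and $G$ is an increasing function of $r$ on $[1,\infty)$.
   Context: $\sigma_{1,1}$ is the smaller root of $\tilde A\sigma^2+\tilde B\sigma+\tilde C=0$ with $\tilde A=L(L^n-1)$, $\tilde B=-\{L^n+(n-1)L^{n+1}+L+n-1\}$, $\tilde C=(n-1)(L^n-1)$; it is the first nonzero Steklov eigenvalue of the annulus $\{x\in\mathbb{R}^n:1<|x|<L\}$. *)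

(* Defs.v *)
From Stdlib Require Import Reals.
From Coquelicot Require Import Coquelicot.
Open Scope R_scope.

(* Coefficients of the quadratic  A s^2 + B s + C = 0  (n = dimension, L = outer radius). *)
Definition At (n : nat) (L : R) : R := L * (L ^ n - 1).
Definition Bt (n : nat) (L : R) : R :=
  - (L ^ n + (INR n - 1) * L ^ (n + 1) + L + (INR n - 1)).
Definition Ct (n : nat) (L : R) : R := (INR n - 1) * (L ^ n - 1).

(* sigma_{1,1}: the smaller root of the quadratic (At > 0 for L > 1). *)
Definition sigma11 (n : nat) (L : R) : R :=
  (- Bt n L - sqrt (Bt n L ^ 2 - 4 * At n L * Ct n L)) / (2 * At n L).

Definition f11 (n : nat) (L : R) (r : R) : R :=
  r + (1 + sigma11 n L) / (INR n - 1 - sigma11 n L) * / r ^ (n - 1).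

Definition Ffun (n : nat) (L : R) (r : R) : R :=
  (Derive (f11 n L) r) ^ 2 + (INR n - 1) / r ^ 2 * (f11 n L r) ^ 2.

Definition Gfun (n : nat) (L : R) (r : R) : R :=
  2 * f11 n L r * Derive (f11 n L) r + (INR n - 1) / r * (f11 n L r) ^ 2.

(* Main.v *)
Require Import Defs.
From Stdlib Require Import Reals Lra Lia Psatz.
From Coquelicot Require Import Coquelicot.
Open Scope R_scope.
Lemma der (c:R) (k:nat) r : 0<r -> is_derive (fun x => x + c * / x^(S k)) r (1 - (INR k + 1)*c / r^(S (S k))).
Proof. intros hr. pose proof (pow_lt r k hr) as hp.
 auto_derive. nra.
 destruct k; simpl in *; field; try nra. Qed.
Lemma gder (c M:R) (k:nat) r : 0<r -> is_derive (fun x => (2+M)*x + 2*c / x^(S k) - M*c^2 / x^(S (S (S (2*k))))) r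
  ((2+M) - 2*(INR k + 1)*c / r^(S (S k)) + M*(2*(INR k+1)+1)*c^2/ r^(S (S (S (S (2*k)))))).
Proof. intros hr. pose proof (pow_lt r k hr) as hp. pose proof (pow_lt r (2*k) hr) as hp2.
 auto_derive. repeat split; try exact I; try (apply Rgt_not_eq; repeat apply Rmult_lt_0_compat; auto; apply pow_lt; auto).
 change (match k with 0%nat => 1 | S _ => INR k + 1 end) with (INR (S k)).
 change (match (k+(k+0))%nat with 0%nat => 1 | S _ => INR (k+(k+0)) + 1 end) with (INR (S (k+(k+0)))).
 rewrite ?Nat.add_0_r, !S_INR, !plus_INR. simpl. rewrite ?Nat.add_0_r, !pow_add. set (u := r^k). assert (0<u) by exact hp. clearbody u. clear hp hp2. field. split; lra. Qed.
Lemma powlt (x y : R) (k : nat) : 0 < x -> x < y -> x ^ (S k) < y ^ (S k).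
Proof. intros hx hxy. induction k as [|k IH]. simpl; lra.
 change (x * x^(S k) < y * y^(S k)). pose proof (pow_lt x (S k) hx). nra. Qed.

Lemma sig_bounds (n : nat) (L : R) : (2 <= n)%nat -> 1 < L ->
  -1 < sigma11 n L < INR n - 1.
Proof. intros hn hL.
 assert (hP : 1 < L ^ n) by (apply Rlt_pow_R1; [lra| lia]).
 assert (hm : 1 <= INR n - 1).
 { apply le_INR in hn. simpl in hn. lra. }
 unfold sigma11, At, Bt, Ct.
 rewrite pow_add, pow_1.
 set (P := L ^ n) in *. set (m := INR n - 1) in *.
 set (A := L * (P - 1)). set (B := - (P + m * (P * L) + L + m)). set (C := m * (P - 1)).
 assert (hA : 0 < A) by (unfold A; nra).
 assert (hq : A * m^2 + B * m + C < 0).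
 { replace (A * m^2 + B * m + C) with (-(m*(m+1)*(L+1))) by (unfold A, B, C; ring).
   assert (0 < m*(m+1)) by nra. assert (0 < m*(m+1)*(L+1)) by (apply Rmult_lt_0_compat; lra). lra. }
 assert (hq2 : A - B + C > 0).
 { replace (A - B + C) with ((m+1)*(P*L + P)) by (unfold A, B, C; ring). apply Rmult_lt_0_compat; nra. }
 assert (hB : B < 0).
 { unfold B. assert (0 < m*(P*L)) by (apply Rmult_lt_0_compat; nra). lra. }
 set (D := B ^ 2 - 4 * A * C).
 pose proof (sqrt_pos D) as hs.
 split.
 - apply Rlt_div_r; [lra|].
   assert (sqrt D < 2 * A - B).
   { destruct (Rle_dec D 0) as [hD|hD].
     + rewrite (sqrt_neg_0 _ hD). lra.
     + rewrite <- (sqrt_pow2 (2*A - B)) by lra.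
       assert ((2*A-B)^2 > D) by (unfold D; nra).
       pose proof (pow2_ge_0 (2*A-B)). apply sqrt_lt_1; lra. }
   lra.
 - apply Rlt_div_l; [lra|].
   assert (- B - 2 * A * m < sqrt D).
   { assert (hD : (- B - 2 * A * m)^2 < D) by (unfold D; nra).
     destruct (Rle_dec (- B - 2 * A * m) 0) as [h|h].
     pose proof (pow2_ge_0 (- B - 2 * A * m)). pose proof (sqrt_lt_R0 D ltac:(lra)). lra.
     rewrite <- (sqrt_pow2 (- B - 2 * A * m)) by lra.
     pose proof (pow2_ge_0 (- B - 2 * A * m)). apply sqrt_lt_1; lra. }
   lra.
Qed.

Theorem lemma3p1 (n : nat) (L : R) (hn : (2 <= n)%nat) (hL : 1 < L) :
  (forall r1 r2 : R, 1 <= r1 -> r1 < r2 -> Ffun n L r2 < Ffun n L r1) /\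
  (forall r1 r2 : R, 1 <= r1 -> r1 < r2 -> Gfun n L r1 < Gfun n L r2).
Proof.
 pose proof (sig_bounds _ _ hn hL) as [s1 s2].
 destruct n as [|[|k]]; [lia|lia|].
 set (s := sigma11 (S (S k)) L) in *.
 assert (hM : INR (S (S k)) - 1 = INR k + 1) by (rewrite !S_INR; ring).
 set (M := INR k + 1) in *.
 assert (hM1 : 1 <= M) by (unfold M; pose proof (pos_INR k); lra).
 set (c := (1 + s) / (INR (S (S k)) - 1 - s)).
 assert (hc : 0 < c) by (unfold c; apply Rdiv_lt_0_compat; lra).
 assert (hf : f11 (S (S k)) L = fun x => x + c * / x^(S k)) by reflexivity.
 assert (hD : forall r, 0 < r -> Derive (f11 (S (S k)) L) r = 1 - M*c / r^(S (S k))).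
 { intros r hr. rewrite hf. apply is_derive_unique. apply der; auto. }
 split.
 - assert (hF : forall r, 0 < r -> Ffun (S (S k)) L r = 1 + M + M*(M+1)*c^2 / (r^(S (S k)))^2).
   { intros r hr. unfold Ffun. rewrite hD by auto. rewrite hM, hf. cbv beta.
     pose proof (pow_lt r k hr). simpl. field. lra. }
   intros r1 r2 h1 h12. rewrite !hF by lra.
   assert (hK : 0 < M*(M+1)*c^2) by (apply Rmult_lt_0_compat; nra).
   pose proof (powlt r1 r2 (S k) ltac:(lra) h12) as hp.
   pose proof (pow_lt r1 (S (S k)) ltac:(lra)) as hp1.
   assert (hq : (r1^(S (S k)))^2 < (r2^(S (S k)))^2) by nra.
   assert (/ (r2^(S (S k)))^2 < / (r1^(S (S k)))^2).
   { assert (0 < (r1^(S (S k)))^2) by (apply pow_lt; auto). apply Rinv_lt_contravar; auto. apply Rmult_lt_0_compat; lra. }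
   unfold Rdiv. nra.
 - set (g := fun x => (2+M)*x + 2*c / x^(S k) - M*c^2 / x^(S (S (S (2*k))))).
   assert (hG : forall r, 0 < r -> Gfun (S (S k)) L r = g r).
   { intros r hr. unfold Gfun, g. rewrite hD by auto. rewrite hM, hf. cbv beta.
     pose proof (pow_lt r k hr). simpl. rewrite Nat.add_0_r, pow_add. field. lra. }
   intros r1 r2 h1 h12. rewrite !hG by lra.
   apply (incr_function g (Finite 0) p_infty
     (fun r => (2+M) - 2*(INR k + 1)*c / r^(S (S k)) + M*(2*(INR k+1)+1)*c^2/ r^(S (S (S (S (2*k))))))).
   + intros x hx _. simpl in hx. apply gder. auto.
   + intros x hx _. simpl in hx. fold M.
     set (y := c / x^(S (S k))).
     assert (e : (2+M) - 2*M*c / x^(S (S k)) + M*(2*M+1)*c^2/ x^(S (S (S (S (2*k))))) = (2+M) - 2*M*y + M*(2*M+1)*y^2).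
     { unfold y. pose proof (pow_lt x k hx). simpl. rewrite Nat.add_0_r, pow_add. field. lra. }
     rewrite e. pose proof (pow2_ge_0 ((2*M+1)*y - 1)).
     assert (0 <= M * ((2*M+1)*y - 1)^2) by (apply Rmult_le_pos; lra).
     assert (0 < (2*M+1)) by lra.
     assert (0 < (2*M+1) * ((2+M) - 2*M*y + M*(2*M+1)*y^2)) by nra.
     nra.
   + simpl; lra.
   + lra.
   + simpl; exact I.
Qed.
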